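(* Let $R_1,R_2$ be discrete valuation domains with maximal ideals $P_1=R_1p_1$ and $P_2=R_2p_2$, let $\overline{R}$ be a field, $\mathcal{V}_i:R_i\to\overline{R}$ surjective ring homomorphisms with $\ker\mathcal{V}_i=P_i$, and $R=\{(r_1,r_2)\in R_1\times R_2:\mathcal{V}_1(r_1)=\mathcal{V}_2(r_2)\}$. Then for all integers $m,n\ge1$ the following separated $R$-modules are indecomposable pseudo-absorbing primary multiplication $R$-modules: (1) $R$; (2) $(R_1/P_1^n\to\overline{R}\leftarrow R_2/P_2^m)$; (3) $(R_1\to\overline{R}\leftarrow R_2/P_2^m)$; (4) $(R_1/P_1^n\to\overline{R}\leftarrow R_2)$.
   Context: For an $R_1$-module $A$ and an $R_2$-module $B$ among $R_1,R_1/P_1^n$ resp. $R_2,R_2/P_2^m$, with $g:A\to\overline{R}$, $h:B\to\overline{R}$ the surjections induced by $\mathcal{V}_1,\mathcal{V}_2$, the notation $(A\to\overline{R}\leftarrow B)$ denotes the $R$-module $\{(a,b)\in A\oplus B:g(a)=h(b)\}$ with $(r_1,r_2)(a,b)=(r_1a,r_2b)$. An $R$-module $S$ is separated if $(P_1\oplus0)S\cap(0\oplus P_2)S=0$, where $P_1\oplus0=\{(a,0):a\in P_1\}$ and $0\oplus P_2=\{(0,b):b\in P_2\}$. A proper ideal $I$ of a commutative ring is 2-absorbing primary if whenever $abc\in I$ then $ab\in I$ or $ac\in\sqrt I$ or $bc\in\sqrt I$. A proper submodule $N$ of an $R$-module $M$ is pseudo-absorbing primary if $(N:_RM)=\{r\in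 R:rM\subseteq N\}$ is a 2-absorbing primary ideal of $R$. $M$ is a pseudo-absorbing primary multiplication module if every pseudo-absorbing primary submodule $N$ of $M$ satisfies $N=IM$ for some ideal $I$ of $R$. *)

(* Defs.v *)
From HB Require Import structures.
From mathcomp Require Import all_boot all_order all_algebra.
Set Implicit Arguments. Unset Strict Implicit. Unset Printing Implicit Defensive.
Import GRing.Theory.
Local Open Scope ring_scope.

(* R is a discrete valuation domain: there is a normalized discrete valuation
   v (defined on nonzero elements) whose valuation ring is exactly R, i.e.
   v(xy)=v(x)+v(y), v(x+y) >= min(v x, v y), divisibility in R is governed by
   v, and v takes the value 1 (so R is not a field). *)
Definition is_DVD (R : idomainType) : Prop :=
  exists v : R -> nat,
    [/\ forall x y, x != 0 -> y != 0 -> v (x * y)%R = addn (v x) (v y),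
        forall x y, x != 0 -> y != 0 -> x + y != 0 ->
          (minn (v x) (v y) <= v (x + y)%R)%N,
        forall x y, x != 0 -> y != 0 -> (v x <= v y)%N -> exists z, y = z * x
      & exists x, x != 0 /\ v x = 1%N].

(* "P = R p": the maximal ideal (= set of non-units of the local ring R)
   is the principal ideal generated by p. *)
Definition max_ideal_gen (R : comUnitRingType) (p : R) : Prop :=
  forall x : R, x \isn't a GRing.unit <-> exists y, x = y * p.

Definition principal (R : comNzRingType) (q : R) : R -> Prop :=
  fun x => exists y, x = y * q.

Definition inR (R1 R2 : comNzRingType) (F : fieldType)
  (V1 : R1 -> F) (V2 : R2 -> F) : R1 * R2 -> Prop :=
  fun r => V1 r.1 = V2 r.2.

Definition is_ideal (S : comNzRingType) (Rp : S -> Prop) (I : S -> Prop) : Prop :=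
  [/\ forall r, I r -> Rp r, I 0,
      forall x y, I x -> I y -> I (x - y)
    & forall r x, Rp r -> I x -> I (r * x)].

Definition proper_ideal (S : comNzRingType) (Rp : S -> Prop) (I : S -> Prop) :=
  is_ideal Rp I /\ exists r, Rp r /\ ~ I r.

Definition rad (S : comNzRingType) (Rp : S -> Prop) (I : S -> Prop) : S -> Prop :=
  fun r => Rp r /\ exists k : nat, I (r ^+ k).

Definition two_abs_primary (S : comNzRingType) (Rp : S -> Prop) (I : S -> Prop) :=
  proper_ideal Rp I /\
  forall a b c, Rp a -> Rp b -> Rp c -> I (a * b * c) ->
    I (a * b) \/ rad Rp I (a * c) \/ rad Rp I (b * c).

(* act : S -> T -> T is the scalar action, M : T -> Prop the module.        *)
Section Modules.
Variables (S : comNzRingType) (T : zmodType) (Rp : S -> Prop)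
  (act : S -> T -> T) (M : T -> Prop).

Definition is_submod (N : T -> Prop) : Prop :=
  [/\ forall x, N x -> M x, N 0,
      forall x y, N x -> N y -> N (x - y)
    & forall r x, Rp r -> N x -> N (act r x)].

Definition colon (N : T -> Prop) : S -> Prop :=
  fun r => Rp r /\ forall x, M x -> N (act r x).

Definition pseudo_abs_primary (N : T -> Prop) : Prop :=
  [/\ is_submod N, exists x, M x /\ ~ N x & two_abs_primary Rp (colon N)].

Inductive IM (I : S -> Prop) : T -> Prop :=
  | IM_gen r x : I r -> M x -> IM I (act r x)
  | IM_0 : IM I 0
  | IM_add x y : IM I x -> IM I y -> IM I (x + y).

Definition PAPM : Prop :=
  forall N, pseudo_abs_primary N ->
    exists I, is_ideal Rp I /\ forall x, N x <-> IM I x.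

Definition indecomposable : Prop :=
  (exists x, M x /\ x <> 0) /\
  forall N1 N2, is_submod N1 -> is_submod N2 ->
    (forall x, N1 x -> N2 x -> x = 0) ->
    (forall x, M x -> exists y z, [/\ N1 y, N2 z & x = y + z]) ->
    (forall x, N1 x -> x = 0) \/ (forall x, N2 x -> x = 0).
End Modules.

(* A is an R1-algebra via pi1 : R1 -> A, B an R2-algebra via pi2. *)
Definition pb_act (R1 R2 A B : comNzRingType)
  (pi1 : R1 -> A) (pi2 : R2 -> B) (r : R1 * R2) (x : A * B) : A * B :=
  (pi1 r.1 * x.1, pi2 r.2 * x.2).

Definition pb_mod (A B : comNzRingType) (F : fieldType)
  (g : A -> F) (h : B -> F) : A * B -> Prop :=
  fun x => g x.1 = h x.2.

Definition separated (R1 R2 : comNzRingType) (T : zmodType)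
  (act : R1 * R2 -> T -> T) (M : T -> Prop) (p1 : R1) (p2 : R2) : Prop :=
  forall x,
    IM act M (fun r : R1 * R2 => principal p1 r.1 /\ r.2 = 0) x ->
    IM act M (fun r : R1 * R2 => r.1 = 0 /\ principal p2 r.2) x -> x = 0.

Definition good_module (R1 R2 : comNzRingType) (F : fieldType)
  (V1 : R1 -> F) (V2 : R2 -> F) (p1 : R1) (p2 : R2)
  (A B : comNzRingType) (pi1 : R1 -> A) (pi2 : R2 -> B)
  (g : A -> F) (h : B -> F) : Prop :=
  let Rp := inR V1 V2 in
  let act := pb_act pi1 pi2 in
  let M := pb_mod g h in
  [/\ separated act M p1 p2, indecomposable Rp act M & PAPM Rp act M].

(* Main.v *)
Require Import Defs.
From HB Require Import structures.
From mathcomp Require Import all_boot all_order all_algebra.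
Import GRing.Theory.
Local Open Scope ring_scope.

Lemma general (R1 R2 : idomainType) (F : fieldType) (p1 : R1) (p2 : R2)
  (V1 : {rmorphism R1 -> F}) (V2 : {rmorphism R2 -> F})
  (A B : comNzRingType) (pi1 : R1 -> A) (pi2 : R2 -> B) (g : A -> F) (h : B -> F) :
  max_ideal_gen p1 -> max_ideal_gen p2 ->
  (forall x, V1 x = 0 <-> principal p1 x) ->
  (forall x, V2 x = 0 <-> principal p2 x) ->
  (forall x y, pi1 (x * y) = pi1 x * pi1 y) -> (forall x y, pi1 (x - y) = pi1 x - pi1 y) ->
  (forall x y, pi1 (x + y) = pi1 x + pi1 y) -> pi1 1 = 1 ->
  (forall x y, pi2 (x * y) = pi2 x * pi2 y) -> (forall x y, pi2 (x - y) = pi2 x - pi2 y) ->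
  (forall x y, pi2 (x + y) = pi2 x + pi2 y) -> pi2 1 = 1 ->
  (forall q, exists x, pi1 x = q) -> (forall q, exists x, pi2 x = q) ->
  (forall x, g (pi1 x) = V1 x) -> (forall x, h (pi2 x) = V2 x) ->
  good_module V1 V2 p1 p2 pi1 pi2 g h.
Proof.
move=> mx1 mx2 K1 K2 pi1M pi1B pi1D pi11 pi2M pi2B pi2D pi21 s1 s2 g1 h2.
have pi10 : pi1 0 = 0 by have := pi1B 0 0; rewrite subr0 => ->; rewrite subrr.
have pi20 : pi2 0 = 0 by have := pi2B 0 0; rewrite subr0 => ->; rewrite subrr.
set Rp := inR V1 V2; set act := pb_act pi1 pi2; set M := pb_mod g h.
pose e : A * B := (1, 1).
have actM : forall r s x, act (r * s) x = act r (act s x).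
  by move=> [r1 r2] [s1' s2'] [x1 x2]; rewrite /act /pb_act /= pi1M pi2M !mulrA.
have acte : forall r, act r e = (pi1 r.1, pi2 r.2).
  by move=> [r1 r2]; rewrite /act /pb_act /= !mulr1.
have Me : M e by rewrite /M /pb_mod /= -pi11 -pi21 g1 h2 !rmorph1.
have RpM : forall r s, Rp r -> Rp s -> Rp (r * s).
  by move=> [r1 r2] [s1' s2']; rewrite /Rp /inR /= !rmorphM => -> ->.
have cyc : forall x, M x -> exists r, Rp r /\ x = act r e.
  move=> [x1 x2]; rewrite /M /pb_mod /= => Hx.
  have [r1 e1] := s1 x1; have [r2 e2] := s2 x2.
  exists (r1, r2); split; last by rewrite acte e1 e2.
  by rewrite /Rp /inR /= -g1 -h2 e1 e2.
split.
- rewrite /separated => x H1 H2.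
  have E2 : x.2 = 0.
    elim: H1 => [r y [_ E] _|//|y z _ Ey _ Ez]; last by transitivity (y.2 + z.2) => //; rewrite Ey Ez addr0.
    by rewrite /act /pb_act /= E pi20 mul0r.
  have E1 : x.1 = 0.
    elim: H2 => [r y [E _] _|//|y z _ Ey _ Ez]; last by transitivity (y.1 + z.1) => //; rewrite Ey Ez addr0.
    by rewrite /act /pb_act /= E pi10 mul0r.
  by move: E1 E2; clear H1 H2; case: x => a b /= -> ->.
- rewrite /indecomposable; split.
    exists e; split => //; move/(congr1 fst) => /= /eqP; rewrite oner_eq0.
    done.
  have claim : forall N r, is_submod Rp act M N -> Rp r -> N (act r e) ->
      V1 r.1 != 0 -> forall x, M x -> N x.
    move=> N [r1 r2] [NM N0 NB Nact] Rr Nr /= nz x Mx.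
    have u1 : r1 \is a GRing.unit.
      apply/negP => /negP /mx1 /K1 E; by rewrite E eqxx in nz.
    have u2 : r2 \is a GRing.unit.
      apply/negP => /negP /mx2 /K2 E; move: nz; by rewrite Rr /= E eqxx.
    have Ru : Rp (r1^-1, r2^-1) by rewrite /Rp /inR /= !rmorphV // Rr.
    have Ne : N e.
      have := Nact _ _ Ru Nr; rewrite -actM.
      have -> : (r1^-1, r2^-1) * (r1, r2) = 1.
        by change ((r1^-1 * r1, r2^-1 * r2) = (1,1)); rewrite !mulVr.
      by rewrite /act /pb_act /= pi11 pi21 !mul1r.
    have [t [Rt ->]] := cyc x Mx.
    exact: Nact.
  move=> N1 N2 S1 S2 disj cover.
  have [NM1 _ _ _] := S1; have [NM2 _ _ _] := S2.
  have [y [z [N1y N2z ez]]] := cover e Me.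
  have [r [Rr yr]] := cyc y (NM1 _ N1y).
  have [s [Rs zs]] := cyc z (NM2 _ N2z).
  have : V1 r.1 + V1 s.1 = 1.
    move: ez => /(congr1 fst); rewrite yr zs !acte /= -pi1D => /(congr1 g).
    by rewrite g1 -pi11 g1 rmorph1 rmorphD => <-.
  have [Hr|Hr] := eqVneq (V1 r.1) 0.
    rewrite Hr add0r => Hs.
    left => x N1x; apply: disj => //.
    apply: (claim N2 s) => //; first by rewrite -zs.
      by rewrite Hs oner_eq0.
    exact: NM1.
  move=> _; right => x N2x; apply: disj => //.
  apply: (claim N1 r) => //; first by rewrite -yr.
  exact: NM2.
- rewrite /PAPM => N [[NM N0 NB Nact] _ _].
  exists (colon Rp act M N); split.
    split.
    + by move=> r [].
    + split; first by rewrite /Rp /inR /= !rmorph0.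
      by move=> x _; rewrite /act /pb_act /= pi10 pi20 !mul0r.
    + move=> [x1 x2] [y1 y2] [Rx Nx] [Ry Ny]; split.
        by move: Rx Ry; rewrite /Rp /inR /= !rmorphB => -> ->.
      move=> z Mz; have := NB _ _ (Nx z Mz) (Ny z Mz).
      by rewrite /act /pb_act /= pi1B pi2B !mulrBl.
    + move=> r x Rr [Rx Nx]; split; first exact: RpM.
      by move=> y My; rewrite actM; apply: Nact => //; apply: Nx.
  move=> x; split.
    move=> Nx; have [r [Rr xr]] := cyc x (NM _ Nx).
    rewrite xr; apply: IM_gen => //; split => // y My.
    have [s [Rs ->]] := cyc y My.
    by rewrite -actM mulrC actM -xr; apply: Nact.
  elim => [r y [_ H] My|//|y z _ Ny _ Nz].
    exact: H.
  have := NB _ _ Ny (NB _ _ N0 Nz); by rewrite sub0r opprK.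
Qed.
Theorem corollary3p3
  (R1 R2 : idomainType) (Rbar : fieldType) (p1 : R1) (p2 : R2)
  (V1 : {rmorphism R1 -> Rbar}) (V2 : {rmorphism R2 -> Rbar}) :
  is_DVD R1 -> is_DVD R2 ->
  max_ideal_gen p1 -> max_ideal_gen p2 ->
  (forall y : Rbar, exists x, V1 x = y) ->
  (forall y : Rbar, exists x, V2 x = y) ->
  (forall x, V1 x = 0 <-> principal p1 x) ->
  (forall x, V2 x = 0 <-> principal p2 x) ->
  forall n m : nat, (1 <= n)%N -> (1 <= m)%N ->
  (* (1) R itself: (R1 -> Rbar <- R2) with the regular action *)
  good_module V1 V2 p1 p2 (fun x : R1 => x) (fun x : R2 => x) V1 V2 /\
  (* (2) (R1/P1^n -> Rbar <- R2/P2^m) *)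
  (forall (Q1 Q2 : comNzRingType) (pi1 : {rmorphism R1 -> Q1})
          (pi2 : {rmorphism R2 -> Q2}) (g : Q1 -> Rbar) (h : Q2 -> Rbar),
     (forall q, exists x, pi1 x = q) -> (forall q, exists x, pi2 x = q) ->
     (forall x, pi1 x = 0 <-> principal (p1 ^+ n) x) ->
     (forall x, pi2 x = 0 <-> principal (p2 ^+ m) x) ->
     (forall x, g (pi1 x) = V1 x) -> (forall x, h (pi2 x) = V2 x) ->
     good_module V1 V2 p1 p2 pi1 pi2 g h) /\
  (* (3) (R1 -> Rbar <- R2/P2^m) *)
  (forall (Q2 : comNzRingType) (pi2 : {rmorphism R2 -> Q2}) (h : Q2 -> Rbar),
     (forall q, exists x, pi2 x = q) ->
     (forall x, pi2 x = 0 <-> principal (p2 ^+ m) x) ->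
     (forall x, h (pi2 x) = V2 x) ->
     good_module V1 V2 p1 p2 (fun x : R1 => x) pi2 V1 h) /\
  (* (4) (R1/P1^n -> Rbar <- R2) *)
  (forall (Q1 : comNzRingType) (pi1 : {rmorphism R1 -> Q1}) (g : Q1 -> Rbar),
     (forall q, exists x, pi1 x = q) ->
     (forall x, pi1 x = 0 <-> principal (p1 ^+ n) x) ->
     (forall x, g (pi1 x) = V1 x) ->
     good_module V1 V2 p1 p2 pi1 (fun x : R2 => x) g V2).
Proof.
move=> _ _ mx1 mx2 _ _ K1 K2 n m _ _.
split; [|split; [|split]].
- apply: general => //; by move=> q; exists q.
- move=> Q1 Q2 pi1 pi2 g h S1 S2 _ _ G H.
  apply: general => //; move=> *; by rewrite ?rmorphM ?rmorphB ?rmorphD ?rmorph1.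
- move=> Q2 pi2 h S2 _ H.
  apply: general => //; try (move=> *; by rewrite ?rmorphM ?rmorphB ?rmorphD ?rmorph1); by move=> q; exists q.
- move=> Q1 pi1 g S1 _ G.
  apply: general => //; try (move=> *; by rewrite ?rmorphM ?rmorphB ?rmorphD ?rmorph1); by move=> q; exists q.
Qed.
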